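(* Let $a>0$, $b>0$, $\mu_1,\mu_2>0$, $\chi_1,\chi_2\ge0$ and $\lambda_1=\lambda_2=\lambda>0$. Let $c^*=c^*(\chi_1,\mu_1,\lambda,\chi_2,\mu_2,\lambda)$ be the quantity defined in the context. Then: (1) if $\chi_1\mu_1=\chi_2\mu_2$, then $c^*=2\sqrt a$ if $a\le\lambda$ and $c^*=\frac{a+\lambda}{\sqrt\lambda}$ if $a\ge\lambda$; (2) if $0<\chi_1\mu_1-\chi_2\mu_2<\frac b2$, then $\lim_{\chi_1\mu_1-\chi_2\mu_2\to0^+}c^*$ equals $2\sqrt a$ if $a\le\lambda$ and $\frac{a+\lambda}{\sqrt\lambda}$ if $a\ge\lambda$ (here $a,b,\lambda$ are fixed and $c^*$ depends on $\chi_1,\chi_2,\mu_1,\mu_2$ only through $\chi_1\mu_1-\chi_2\mu_2$); (3) if $\chi_1\mu_1<\chi_2\mu_2$, then $\lim_{\chi_2\mu_2-\chi_1\mu_1\to0^+}c^*$ equals $2\sqrt a$ if $a\le\lambda$ and $\frac{a+\lambda}{\sqrt\lambda}$ if $a\ge\lambda$.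
   Context: For general $\lambda_1,\lambda_2>0$ and $0<\mu<\min\{1,\sqrt{\lambda_1/a},\sqrt{\lambda_2/a}\}$ define $$\overline{L}_{\mu}=\min\Big\{\frac{\chi_1\mu_1\lambda_1(\lambda_1-\lambda_2)_+}{(\lambda_2-a\mu^2)(\lambda_1-a\mu^2)}+\frac{(\chi_2\mu_2\lambda_2-\chi_1\mu_1\lambda_1)_{+}}{\lambda_2-a\mu^2},\ \frac{\chi_2\mu_2\lambda_2(\lambda_1-\lambda_2)_+}{(\lambda_2-a\mu^2)(\lambda_1-a\mu^2)}+\frac{(\chi_2\mu_2\lambda_2-\chi_1\mu_1\lambda_1)_{+}}{\lambda_1-a\mu^2}\Big\},$$ $$K_{\mu}=\min\Big\{\tfrac{|\chi_2\mu_2-\chi_1\mu_1|(\sqrt{\lambda_2-a\mu^2}+\mu\sqrt a)}{\lambda_2-a\mu^2}+\Big|\tfrac{\chi_1\mu_1}{\sqrt{\lambda_1-a\mu^2}}-\tfrac{\chi_1\mu_1}{\sqrt{\lambda_2-a\mu^2}}\Big|+\tfrac{\mu\sqrt a\chi_1\mu_1|\lambda_1-\lambda_2|}{(\lambda_1-a\mu^2)(\lambda_2-a\mu^2)},\ \tfrac{|\chi_2\mu_2-\chi_1\mu_1|(\sqrt{\lambda_1-a\mu^2}+\mu\sqrt a)}{\lambda_1-a\mu^2}+\Big|\tfrac{\chi_2\mu_2}{\sqrt{\lambda_2-a\mu^2}}-\tfrac{\chi_2\mu_2}{\sqrt{\lambda_1-a\mu^2}}\Big|+\tfrac{\mu\sqrt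 a\chi_2\mu_2|\lambda_2-\lambda_1|}{(\lambda_2-a\mu^2)(\lambda_1-a\mu^2)}\Big\},$$ where $(r)_+=\max\{r,0\}$. Let $\mu^*=\sup\{\bar\mu\in(0,\min\{1,\sqrt{\lambda_1/a},\sqrt{\lambda_2/a}\}) : \mu\sqrt a K_\mu+\overline L_\mu\le b+\chi_2\mu_2-\chi_1\mu_1 \text{ for all } 0<\mu\le\bar\mu\}$ and $c^*(\chi_1,\mu_1,\lambda_1,\chi_2,\mu_2,\lambda_2)=\lim_{\mu\to\mu^{*-}}\sqrt a(\mu+\frac1\mu)$. *)

(* Defs.v *)
From HB Require Import structures.
From mathcomp Require Import all_boot all_order all_algebra.
From mathcomp Require Import all_classical all_reals all_analysis.
Set Implicit Arguments. Unset Strict Implicit. Unset Printing Implicit Defensive.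
Import Order.TTheory GRing.Theory Num.Theory.
Import numFieldNormedType.Exports.
Local Open Scope ring_scope.
Local Open Scope classical_set_scope.

Definition posp {R : realType} (r : R) : R := Num.max r 0.

Definition Lbar {R : realType} (a chi1 mu1 l1 chi2 mu2 l2 mu : R) : R :=
  Num.min
    (chi1 * mu1 * l1 * posp (l1 - l2) / ((l2 - a * mu ^+ 2) * (l1 - a * mu ^+ 2))
      + posp (chi2 * mu2 * l2 - chi1 * mu1 * l1) / (l2 - a * mu ^+ 2))
    (chi2 * mu2 * l2 * posp (l1 - l2) / ((l2 - a * mu ^+ 2) * (l1 - a * mu ^+ 2))
      + posp (chi2 * mu2 * l2 - chi1 * mu1 * l1) / (l1 - a * mu ^+ 2)).

Definition Kmu {R : realType} (a chi1 mu1 l1 chi2 mu2 l2 mu : R) : R :=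
  Num.min
    (`|chi2 * mu2 - chi1 * mu1| * (Num.sqrt (l2 - a * mu ^+ 2) + mu * Num.sqrt a)
        / (l2 - a * mu ^+ 2)
      + `|chi1 * mu1 / Num.sqrt (l1 - a * mu ^+ 2) - chi1 * mu1 / Num.sqrt (l2 - a * mu ^+ 2)|
      + mu * Num.sqrt a * chi1 * mu1 * `|l1 - l2|
        / ((l1 - a * mu ^+ 2) * (l2 - a * mu ^+ 2)))
    (`|chi2 * mu2 - chi1 * mu1| * (Num.sqrt (l1 - a * mu ^+ 2) + mu * Num.sqrt a)
        / (l1 - a * mu ^+ 2)
      + `|chi2 * mu2 / Num.sqrt (l2 - a * mu ^+ 2) - chi2 * mu2 / Num.sqrt (l1 - a * mu ^+ 2)|
      + mu * Num.sqrt a * chi2 * mu2 * `|l2 - l1|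
        / ((l2 - a * mu ^+ 2) * (l1 - a * mu ^+ 2))).

Definition mu_bound {R : realType} (a l1 l2 : R) : R :=
  Num.min 1 (Num.min (Num.sqrt (l1 / a)) (Num.sqrt (l2 / a))).

Definition admissible {R : realType} (a b chi1 mu1 l1 chi2 mu2 l2 : R) : set R :=
  [set mubar | 0 < mubar /\ mubar < mu_bound a l1 l2 /\
     (forall mu, 0 < mu -> mu <= mubar ->
        mu * Num.sqrt a * Kmu a chi1 mu1 l1 chi2 mu2 l2 mu
          + Lbar a chi1 mu1 l1 chi2 mu2 l2 mu
        <= b + chi2 * mu2 - chi1 * mu1)].

Definition mu_star {R : realType} (a b chi1 mu1 l1 chi2 mu2 l2 : R) : R :=
  sup (admissible a b chi1 mu1 l1 chi2 mu2 l2).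

Definition c_star {R : realType} (a b chi1 mu1 l1 chi2 mu2 l2 : R) : R :=
  lim ((Num.sqrt a * (mu + mu^-1)) @[mu --> (mu_star a b chi1 mu1 l1 chi2 mu2 l2)^'-]).

(* Main.v *)
Require Import Defs.
From HB Require Import structures.
From mathcomp Require Import all_boot all_order all_algebra.
From mathcomp Require Import all_classical all_reals all_analysis.
From mathcomp Require Import ring lra.
Import Order.TTheory GRing.Theory Num.Theory.
Import numFieldNormedType.Exports.
Local Open Scope ring_scope.
Local Open Scope classical_set_scope.
Lemma lim_g (R : realType) (a p : R) : 0 < p ->
  lim ((Num.sqrt a * (mu + mu^-1)) @[mu --> p^'-]) = Num.sqrt a * (p + p^-1).
Proof.
move=> p0.
have H : (fun mu : R => Num.sqrt a * (mu + mu^-1)) @ p --> Num.sqrt a * (p + p^-1).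
  apply: cvgMl_tmp; apply: cvgD; first exact: cvg_id.
  by apply: cvgV; [rewrite gt_eqF | exact: cvg_id].
have K := cvg_at_left_filter H.
apply: cvg_lim; last exact: K.
exact: norm_hausdorff.
Qed.

Lemma key (R : realType) (q s sl mu D P S S0 lam b M : R) :
  0 <= q -> 0 <= mu -> mu <= 1 -> 0 <= s -> s <= sl -> 0 < S0 -> S0 <= S ->
  0 <= P -> P <= lam * `|D| -> 0 <= lam -> M = (q * (sl + q) + lam) / S0 ->
  `|D| * (M + 1) <= b ->
  mu * q * (`|D| * (s + mu * q) / S) + P / S <= b + D.
Proof.
move=> q0 mu0 mu1 s0 ssl S00 SS P0 Pl l0 -> Hb.
have S0' : 0 < S by apply: lt_le_trans SS.
have D0 : 0 <= `|D| := normr_ge0 D.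
have E : mu * q * (`|D| * (s + mu * q) / S) + P / S
   = S^-1 * (mu * q * (`|D| * (s + mu * q)) + P).
  by ring.
rewrite E.
have muq : mu * q <= q by rewrite -[X in _ <= X]mul1r ler_wpM2r.
have muq0 : 0 <= mu * q by apply: mulr_ge0.
have T0 : 0 <= mu * q * (`|D| * (s + mu * q)) + P.
  by apply: addr_ge0 => //; apply: mulr_ge0 => //; apply: mulr_ge0 => //; apply: addr_ge0.
have TU : mu * q * (`|D| * (s + mu * q)) + P <= `|D| * (q * (sl + q) + lam).
  have h1 : mu * q * (`|D| * (s + mu * q)) <= q * (`|D| * (sl + q)).
    apply: ler_pM => //; first by apply: mulr_ge0 => //; apply: addr_ge0.
    apply: ler_wpM2l => //. by apply: lerD.
  rewrite [X in _ <= X]mulrDr; apply: lerD; last by rewrite mulrC.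
  by apply: (le_trans h1); rewrite mulrCA.
have iS : S^-1 <= S0^-1 by rewrite lef_pV2 ?posrE.
have iS0 : 0 <= S^-1 by rewrite invr_ge0 ltW.
apply: (le_trans (ler_pM iS0 T0 iS TU)).
have -> : S0^-1 * (`|D| * (q * (sl + q) + lam)) = `|D| * ((q * (sl + q) + lam) / S0).
  by rewrite mulrCA [S0^-1 * _]mulrC.
have : - `|D| <= D by rewrite lerNnormlW.
move: Hb; rewrite mulrDr mulr1 => Hb H. lra.
Qed.
Definition Mc {R : realType} (a lam mubar : R) :=
  (Num.sqrt a * (Num.sqrt lam + Num.sqrt a) + lam) / (lam - a * mubar ^+ 2).

Lemma mu_bound_facts (R : realType) (a lam mubar : R) : 0 < a -> 0 < lam ->
  0 < mubar -> mubar < mu_bound a lam lam -> mubar < 1 /\ 0 < lam - a * mubar ^+ 2.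
Proof.
move=> a0 l0 m0; rewrite /mu_bound minxx lt_min => /andP[m1 mq]; split => //.
have : mubar ^+ 2 < lam / a.
  have h : 0 <= lam / a by rewrite divr_ge0 // ltW.
  rewrite -(sqr_sqrtr h); rewrite ltr_pXn2r //; first exact: ltW.
  by rewrite nnegrE sqrtr_ge0.
rewrite ltr_pdivlMr // => H; rewrite subr_gt0 mulrC //.
Qed.

Lemma adm (R : realType) (a b lam c1 m1 c2 m2 mubar : R) : 0 < a -> 0 < lam ->
  0 < mubar -> mubar < mu_bound a lam lam ->
  `|c2 * m2 - c1 * m1| * (Mc a lam mubar + 1) <= b ->
  admissible a b c1 m1 lam c2 m2 lam mubar.
Proof.
move=> a0 l0 mb0 mbb Hb.
have [mb1 S00] := @mu_bound_facts R a lam mubar a0 l0 mb0 mbb.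
split => //; split => // mu mu0 mumb.
rewrite /Kmu /Lbar /posp !subrr !normr0 maxxx !mulr0 !mul0r !add0r !addr0 !minxx.
rewrite -addrA.
have SS : lam - a * mubar ^+ 2 <= lam - a * mu ^+ 2.
  apply: lerB => //; apply: ler_wpM2l; [exact: ltW | nra].
refine (@key R _ _ (Num.sqrt lam) _ _ _ _ (lam - a * mubar ^+ 2) lam _ (Mc a lam mubar) _ _ _ _ _ _ _ _ _ _ _ _).
- exact: sqrtr_ge0.
- exact: ltW.
- exact: le_trans mumb (ltW mb1).
- exact: sqrtr_ge0.
- apply: ler_wsqrtr; rewrite lerBlDr lerDl; apply: mulr_ge0; [exact: ltW | exact: sqr_ge0].
- exact: S00.
- exact: SS.
- by rewrite le_max lexx orbT.
- rewrite ge_max; apply/andP; split; last by apply: mulr_ge0; [exact: ltW | exact: normr_ge0].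
  have -> : c2 * m2 * lam - c1 * m1 * lam = lam * (c2 * m2 - c1 * m1) by ring.
  by apply: ler_wpM2l; [exact: ltW | exact: ler_norm].
- exact: ltW.
- by [].
- exact: Hb.
Qed.
Lemma mb_pos {R : realType} (a lam : R) : 0 < a -> 0 < lam ->
  0 < mu_bound a lam lam /\ mu_bound a lam lam <= 1.
Proof.
move=> a0 l0; rewrite /mu_bound minxx; split.
  by rewrite lt_min ltr01 sqrtr_gt0 divr_gt0.
by rewrite ge_min lexx.
Qed.

Lemma star {R : realType} (a b lam c1 m1 c2 m2 mubar : R) : 0 < mubar ->
  admissible a b c1 m1 lam c2 m2 lam mubar ->
  mubar <= mu_star a b c1 m1 lam c2 m2 lam /\
  mu_star a b c1 m1 lam c2 m2 lam <= mu_bound a lam lam.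
Proof.
move=> m0 Am.
have ub : ubound (admissible a b c1 m1 lam c2 m2 lam) (mu_bound a lam lam).
  by move=> y [_ [h _]]; exact: ltW.
rewrite /mu_star; split.
  by apply: ub_le_sup => //; exists (mu_bound a lam lam).
by apply: ge_sup => //; exists mubar.
Qed.

Lemma gclose {R : realType} (a m mu : R) : 0 < m -> m / 2 <= mu -> mu <= m ->
  `|Num.sqrt a * (mu + mu^-1) - Num.sqrt a * (m + m^-1)|
    <= Num.sqrt a * (m - mu) * (1 + 2 * m^-1 ^+ 2).
Proof.
move=> m0 hm mum.
have mu0 : 0 < mu by apply: lt_le_trans hm; rewrite divr_gt0.
have E : Num.sqrt a * (mu + mu^-1) - Num.sqrt a * (m + m^-1)
   = Num.sqrt a * (m - mu) * (mu^-1 * m^-1 - 1).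
  by field; rewrite !gt_eqF.
rewrite E normrM (ger0_norm (_ : 0 <= _ * _)); last first.
  by apply: mulr_ge0; [exact: sqrtr_ge0 | rewrite subr_ge0].
apply: ler_wpM2l; first by apply: mulr_ge0; [exact: sqrtr_ge0 | rewrite subr_ge0].
have hu : mu^-1 <= 2 * m^-1.
  have -> : 2 * m^-1 = (m / 2)^-1 by rewrite invfM invrK mulrC.
  by rewrite lef_pV2 ?posrE ?divr_gt0.
have hw : mu^-1 * m^-1 <= 2 * m^-1 ^+ 2.
  by rewrite expr2 mulrA ler_wpM2r // invr_ge0 ltW.
have hw0 : 0 < mu^-1 * m^-1 by rewrite mulr_gt0 // invr_gt0.
have hv : 0 <= m^-1 ^+ 2 by exact: sqr_ge0.
rewrite ler_norml; apply/andP; split; lra.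
Qed.
Lemma Lval {R : realType} (a lam : R) : 0 < a -> 0 < lam ->
  (a <= lam -> Num.sqrt a * (mu_bound a lam lam + (mu_bound a lam lam)^-1) = 2 * Num.sqrt a) /\
  (lam <= a -> Num.sqrt a * (mu_bound a lam lam + (mu_bound a lam lam)^-1)
                 = (a + lam) / Num.sqrt lam).
Proof.
move=> a0 l0; rewrite /mu_bound minxx; split => h.
  rewrite min_l; first by rewrite invr1; ring.
  by rewrite -sqrtr1 ler_wsqrtr // ler_pdivlMr // mul1r.
rewrite min_r; last by rewrite -sqrtr1 ler_wsqrtr // ler_pdivrMr // mul1r.
have sa : 0 < Num.sqrt a by rewrite sqrtr_gt0.
have sl : 0 < Num.sqrt lam by rewrite sqrtr_gt0.
rewrite sqrtrM ?ltW // sqrtrV ?ltW //.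
move: (sqr_sqrtr (ltW a0)) (sqr_sqrtr (ltW l0)) sa sl.
set x := Num.sqrt a; set y := Num.sqrt lam => ea el sa sl.
rewrite -ea -el.
by field; rewrite !gt_eqF.
Qed.

Lemma approx {R : realType} (a b lam : R) : 0 < a -> 0 < b -> 0 < lam ->
  forall eps : R, 0 < eps -> exists2 delta : R, 0 < delta &
    forall c1 m1 c2 m2 : R, `|c2 * m2 - c1 * m1| < delta ->
    `|c_star a b c1 m1 lam c2 m2 lam
       - Num.sqrt a * (mu_bound a lam lam + (mu_bound a lam lam)^-1)| < eps.
Proof.
move=> a0 b0 l0 eps e0.
have [m0 m1] := @mb_pos R a lam a0 l0.
set m := mu_bound a lam lam in m0 m1 *.
set K := Num.sqrt a * (1 + 2 * m^-1 ^+ 2).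
have K0 : 0 < K.
  rewrite /K mulr_gt0 ?sqrtr_gt0 //; have := sqr_ge0 (m^-1); lra.
set eta := Num.min (m / 2) (eps / (2 * K)).
have eta0 : 0 < eta by rewrite lt_min divr_gt0 //= divr_gt0 // mulr_gt0.
have eta1 : eta <= m / 2 by rewrite ge_min lexx.
have eta2 : eta <= eps / (2 * K) by rewrite ge_min lexx orbT.
set mubar := m - eta.
have mb0 : 0 < mubar by rewrite /mubar subr_gt0; lra.
have mbm : mubar < m by rewrite /mubar; lra.
have [_ S00] := @mu_bound_facts R a lam mubar a0 l0 mb0 mbm.
have Mc0 : 0 <= Mc a lam mubar.
  rewrite /Mc; apply: divr_ge0; last exact: ltW.
  apply: addr_ge0; last exact: ltW.
  by apply: mulr_ge0; [exact: sqrtr_ge0 | apply: addr_ge0; exact: sqrtr_ge0].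
exists (b / (Mc a lam mubar + 1)).
  by rewrite divr_gt0 //; lra.
move=> c1 m1' c2 m2 hD.
have Am : admissible a b c1 m1' lam c2 m2 lam mubar.
  apply: adm => //; apply: ltW.
  by rewrite -ltr_pdivlMr //; lra.
have [s1 s2] := @star R _ _ _ _ _ _ _ _ mb0 Am.
rewrite /c_star lim_g; last exact: lt_le_trans s1.
apply: (le_lt_trans (@gclose R _ _ _ _ _ _)) => //; first by rewrite /mubar in s1; lra.
have : (m - mu_star a b c1 m1' lam c2 m2 lam) <= eta by rewrite /mubar in s1; lra.
move=> h.
have : Num.sqrt a * (m - mu_star a b c1 m1' lam c2 m2 lam) * (1 + 2 * m^-1 ^+ 2)
       = K * (m - mu_star a b c1 m1' lam c2 m2 lam) by rewrite /K; ring.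
move=> ->.
have hK : K * eta <= eps / 2.
  rewrite -(ler_pM2l K0) in eta2.
  have E2 : K * (eps / (2 * K)) = eps / 2 by field; rewrite gt_eqF.
  by rewrite -E2.
have : K * (m - mu_star a b c1 m1' lam c2 m2 lam) <= K * eta by rewrite ler_pM2l.
lra.
Qed.
Theorem mainTheorem2 (R : realType) (a b lam : R) :
  0 < a -> 0 < b -> 0 < lam ->
  (* (1) chi1 mu1 = chi2 mu2 *)
  (forall chi1 mu1 chi2 mu2 : R,
     0 < mu1 -> 0 < mu2 -> 0 <= chi1 -> 0 <= chi2 ->
     chi1 * mu1 = chi2 * mu2 ->
     (a <= lam -> c_star a b chi1 mu1 lam chi2 mu2 lam = 2 * Num.sqrt a) /\
     (lam <= a -> c_star a b chi1 mu1 lam chi2 mu2 lam = (a + lam) / Num.sqrt lam)) /\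
  (* (2) limit as chi1 mu1 - chi2 mu2 -> 0+, within 0 < chi1 mu1 - chi2 mu2 < b/2 *)
  (forall L : R,
     ((a <= lam /\ L = 2 * Num.sqrt a) \/ (lam <= a /\ L = (a + lam) / Num.sqrt lam)) ->
     forall eps : R, 0 < eps -> exists2 delta : R, 0 < delta &
       forall chi1 mu1 chi2 mu2 : R,
         0 < mu1 -> 0 < mu2 -> 0 <= chi1 -> 0 <= chi2 ->
         0 < chi1 * mu1 - chi2 * mu2 -> chi1 * mu1 - chi2 * mu2 < b / 2 ->
         chi1 * mu1 - chi2 * mu2 < delta ->
         `|c_star a b chi1 mu1 lam chi2 mu2 lam - L| < eps) /\
  (* (3) limit as chi2 mu2 - chi1 mu1 -> 0+ *)
  (forall L : R,
     ((a <= lam /\ L = 2 * Num.sqrt a) \/ (lam <= a /\ L = (a + lam) / Num.sqrt lam)) ->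
     forall eps : R, 0 < eps -> exists2 delta : R, 0 < delta &
       forall chi1 mu1 chi2 mu2 : R,
         0 < mu1 -> 0 < mu2 -> 0 <= chi1 -> 0 <= chi2 ->
         0 < chi2 * mu2 - chi1 * mu1 ->
         chi2 * mu2 - chi1 * mu1 < delta ->
         `|c_star a b chi1 mu1 lam chi2 mu2 lam - L| < eps).
Proof.
move=> a0 b0 l0.
have [LA LB] := @Lval R a lam a0 l0.
have Lv : forall L : R,
  ((a <= lam /\ L = 2 * Num.sqrt a) \/ (lam <= a /\ L = (a + lam) / Num.sqrt lam)) ->
  L = Num.sqrt a * (mu_bound a lam lam + (mu_bound a lam lam)^-1).
  by move=> L [[h ->]|[h ->]]; [rewrite LA | rewrite LB].
have Ex : forall chi1 mu1 chi2 mu2 : R, chi1 * mu1 = chi2 * mu2 ->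
  c_star a b chi1 mu1 lam chi2 mu2 lam
   = Num.sqrt a * (mu_bound a lam lam + (mu_bound a lam lam)^-1).
  move=> c1 m1 c2 m2 he.
  apply/eqP; rewrite -subr_eq0 -normr_eq0; apply/negPn/negP => hne.
  have hp : 0 < `|c_star a b c1 m1 lam c2 m2 lam
       - Num.sqrt a * (mu_bound a lam lam + (mu_bound a lam lam)^-1)|.
    by rewrite lt_neqAle eq_sym hne normr_ge0.
  have [d d0 H] := @approx R a b lam a0 b0 l0 _ hp.
  have := H c1 m1 c2 m2; rewrite he subrr normr0 => /(_ d0).
  by rewrite ltxx.
split; [|split].
- move=> c1 m1 c2 m2 _ _ _ _ he; split => h; rewrite Ex //.
  + by rewrite LA.
  + by rewrite LB.
- move=> L HL eps e0; have [d d0 H] := @approx R a b lam a0 b0 l0 eps e0.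
  exists d => // c1 m1 c2 m2 _ _ _ _ h1 _ h2.
  rewrite (Lv L HL); apply: H.
  by rewrite distrC gtr0_norm.
- move=> L HL eps e0; have [d d0 H] := @approx R a b lam a0 b0 l0 eps e0.
  exists d => // c1 m1 c2 m2 _ _ _ _ h1 h2.
  rewrite (Lv L HL); apply: H.
  by rewrite gtr0_norm.
Qed.
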